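(* Let $C_4=\langle y\mid y^4=e\rangle$ and $\Delta=\{x,y,z\}$ with $x=y^2$, $z=y^3$ (so $C_\Delta(C_4)$ is the complete graph on four vertices). Then $W=W_xU_x+W_yU_y+W_zU_z$ is a homogeneous scalar quantum walk on $C_\Delta(C_4)$ whenever, for some real $\phi$ and integer $q$, $W_x=\cos\phi$, $W_y=\frac{1+i(-1)^q}{2}\sin\phi$, $W_z=-\frac{1-i(-1)^q}{2}\sin\phi$ and these values are nonzero; in particular the complete graph on four vertices admits such a walk.
   Context: The Cayley graph $C_\Delta(\Gamma)$ has vertex set $\Gamma$ and directed edges $(g,g\delta)$, $g\in\Gamma,\delta\in\Delta$. Let $\ell^2(\Gamma)$ have orthonormal basis $\{|g\rangle\}_{g\in\Gamma}$ and for $\delta\in\Gamma$ let $U_\delta|g\rangle=|g\delta\rangle$. A homogeneous scalar quantum walk on $C_\Delta(\Gamma)$ is a unitary operator $W=\sum_{\delta\in\Delta}W_\delta U_\delta$ with all complex coefficients $W_\delta$ nonzero. *)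

(* Defs.v *)
From HB Require Import structures.
From mathcomp Require Import all_boot all_order all_algebra.
From mathcomp Require Import complex.
From mathcomp Require Import all_classical all_reals all_analysis.
Set Implicit Arguments. Unset Strict Implicit. Unset Printing Implicit Defensive.
Import Order.TTheory GRing.Theory Num.Theory.
Local Open Scope ring_scope.
Local Open Scope complex_scope.

(* The cyclic group Z/(n+1) written additively as 'I_n.+1; l^2(Gamma) is
   C^(n+1) with basis |g>, operators are (n+1)x(n+1) complex matrices
   acting on column vectors. *)

(* Right translation U_d |g> = |g d>  (here g + d). *)
Definition Ushift (R : rcfType) (n : nat) (d : 'I_n.+1) : 'M[R[i]]_n.+1 :=
  \matrix_(h, g) ((h == g + d)%:R).

Definition adjmx (R : rcfType) (n : nat) (A : 'M[R[i]]_n.+1) : 'M[R[i]]_n.+1 :=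
  \matrix_(i, j) conjc (A j i).

Definition unitary_mx (R : rcfType) (n : nat) (A : 'M[R[i]]_n.+1) : Prop :=
  A *m adjmx A = 1%:M /\ adjmx A *m A = 1%:M.

Definition walk_op (R : rcfType) (n : nat) (Delta : seq 'I_n.+1)
  (c : 'I_n.+1 -> R[i]) : 'M[R[i]]_n.+1 :=
  \sum_(d <- Delta) c d *: Ushift R d.

Definition is_hsqw (R : rcfType) (n : nat) (Delta : seq 'I_n.+1)
  (c : 'I_n.+1 -> R[i]) : Prop :=
  uniq Delta /\ unitary_mx (walk_op Delta c) /\ (forall d, d \in Delta -> c d != 0).

Definition y4 : 'I_4 := inord 1.
Definition x4 : 'I_4 := inord 2.
Definition z4 : 'I_4 := inord 3.
Definition Delta4 : seq 'I_4 := [:: x4; y4; z4].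

Definition coeffs (R : realType) (phi : R) (q : int) : 'I_4 -> R[i] :=
  fun d =>
    if d == x4 then (cos phi)%:C
    else if d == y4 then ((1 +i* ((-1) ^ q)) / 2%:R) * (sin phi)%:C
    else if d == z4 then - (((1 -i* ((-1) ^ q)) / 2%:R) * (sin phi)%:C)
    else 0.

(* Main.v *)
Require Import Defs.
From HB Require Import structures.
From mathcomp Require Import all_boot all_order all_algebra.
From mathcomp Require Import complex.
From mathcomp Require Import all_classical all_reals all_analysis.
From mathcomp Require Import ring lra.
Import Order.TTheory GRing.Theory Num.Theory.
Local Open Scope ring_scope.
Local Open Scope complex_scope.

Lemma x4E : x4 = Ordinal (isT : (2 < 4)%N). Proof. by apply: val_inj; rewrite /= inordK. Qed.
Lemma y4E : y4 = Ordinal (isT : (1 < 4)%N). Proof. by apply: val_inj; rewrite /= inordK. Qed.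
Lemma z4E : z4 = Ordinal (isT : (3 < 4)%N). Proof. by apply: val_inj; rewrite /= inordK. Qed.
Lemma uniqD : uniq Delta4. Proof. by rewrite /Delta4 x4E y4E z4E. Qed.
Lemma walkE (R : rcfType) (c : 'I_4 -> R[i]) h g :
  walk_op Delta4 c h g = c x4 * (h == g + x4)%:R + c y4 * (h == g + y4)%:R + c z4 * (h == g + z4)%:R.
Proof. by rewrite /walk_op !big_cons big_nil !mxE !addrA addr0. Qed.

Lemma core (R : rcfType) (c : 'I_4 -> R[i]) (A S sg : R) :
  A ^+ 2 + S ^+ 2 = 1 -> (sg = 1 \/ sg = -1) ->
  c x4 = (A +i* 0) -> c y4 = (S / 2 +i* (sg * S / 2)) -> c z4 = (- (S / 2) +i* (sg * S / 2)) ->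
  unitary_mx (walk_op Delta4 c).
Proof.
move=> HAS Hsg ha hb hd.
split; apply/matrixP => h g; rewrite !mxE;
rewrite !big_ord_recr big_ord0 /= !mxE !walkE ha hb hd x4E y4E z4E;
(case: h => [[|[|[|[|h]]]] Hh] //; case: g => [[|[|[|[|g]]]] Hg] //=);
apply/eqP; rewrite eq_complex /=; apply/andP; split; apply/eqP;
(case: Hsg => ->); nra.
Qed.

Lemma sgpm (R : realType) (q : int) : ((-1 : R) ^ q = 1) \/ ((-1 : R) ^ q = -1).
Proof.
case: q => n; rewrite ?NegzE /=.
- rewrite -exprnP -signr_odd; case: (odd n) => /=; rewrite ?expr0 ?expr1; by [left|right].
- rewrite -invr_expz -exprnP -signr_odd; case: (odd n.+1) => /=; rewrite ?expr0 ?expr1 ?invr1 ?invrN ?invr1; by [left|right].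
Qed.

Theorem mainTheorem9 (R : realType) :
  (forall (phi : R) (q : int),
      (cos phi)%:C != 0 ->
      ((1 +i* ((-1) ^ q)) / 2%:R) * (sin phi)%:C != 0 ->
      - (((1 -i* ((-1) ^ q)) / 2%:R) * (sin phi)%:C) != 0 ->
      is_hsqw Delta4 (coeffs phi q))
  /\ (exists c : 'I_4 -> R[i], is_hsqw Delta4 c).
Proof.
split.
  move=> phi q H1 H2 H3.
  have Hxy : (x4 == y4) = false by rewrite x4E y4E.
  have Hxz : (x4 == z4) = false by rewrite x4E z4E.
  have Hyz : (y4 == z4) = false by rewrite z4E y4E.
  have Hcx : coeffs phi q x4 = (cos phi)%:C by rewrite /coeffs eqxx.
  have Hcy : coeffs phi q y4 = ((1 +i* ((-1) ^ q)) / 2%:R) * (sin phi)%:C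
    by rewrite /coeffs eqxx eq_sym Hxy.
  have Hcz : coeffs phi q z4 = - (((1 -i* ((-1) ^ q)) / 2%:R) * (sin phi)%:C)
    by rewrite /coeffs eqxx eq_sym Hxz eq_sym Hyz.
  split; first exact: uniqD.
  split.
    apply: (@core R _ (cos phi) (sin phi) ((-1) ^ q)).
    - exact: cos2Dsin2.
    - exact: sgpm.
    - by rewrite Hcx.
    - rewrite Hcy; apply/eqP; rewrite eq_complex /=; apply/andP; split; apply/eqP;
      rewrite !(addr0, add0r, mulr0, mul0r, oppr0, subr0, expr0n) /=; field; done.
    - rewrite Hcz; apply/eqP; rewrite eq_complex /=; apply/andP; split; apply/eqP;
      rewrite !(addr0, add0r, mulr0, mul0r, oppr0, subr0, expr0n) /=; field; done.
  move=> d; rewrite !inE => /or3P [] /eqP ->.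
  - by rewrite Hcx.
  - by rewrite Hcy.
  - by rewrite Hcz.
pose c : 'I_4 -> R[i] := fun d => if d == x4 then ((3/5) +i* 0) else if d == y4 then ((2/5) +i* (2/5)) else ((-(2/5)) +i* (2/5)).
exists c; split; first exact: uniqD.
have Hxy : (x4 == y4) = false by rewrite x4E y4E.
have Hxz : (x4 == z4) = false by rewrite x4E z4E.
have Hyz : (y4 == z4) = false by rewrite z4E y4E.
split.
  apply: (@core R c (3/5) (4/5) 1).
  - lra.
  - by left.
  - by rewrite /c eqxx.
  - rewrite /c eqxx eq_sym Hxy; apply/eqP; rewrite eq_complex /=; apply/andP; split; apply/eqP; lra.
  - rewrite /c eq_sym Hxz eq_sym Hyz; apply/eqP; rewrite eq_complex /=; apply/andP; split; apply/eqP; lra.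
move=> d; rewrite !inE => /or3P [] /eqP ->; rewrite /c ?eqxx ?(eq_sym y4) ?Hxy ?(eq_sym z4) ?Hxz ?Hyz;
  rewrite eq_complex /= negb_and; apply/orP; left; apply/eqP; lra.
Qed.
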